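(* Let $(n_1,\dots,n_K)$ be a multinomial random variable with parameters $n\ge1$ and $(p_1,\dots,p_K)$. For any $\delta>0$, $$\Pr\Big(\sum_{i=1}^Kp_i^2>\sum_{i=1}^K\Big(\frac{n_i}{n}\Big)^2+2\sqrt{\frac2n\ln\frac K\delta}\Big)<\delta.$$ *)

(* Defs.v *)
From HB Require Import structures.
From mathcomp Require Import all_boot all_order all_algebra.
From mathcomp Require Import all_classical all_reals exp.
Set Implicit Arguments. Unset Strict Implicit. Unset Printing Implicit Defensive.
Import Order.TTheory GRing.Theory Num.Theory.
Local Open Scope ring_scope.

(* Outcomes of a multinomial random variable with n trials and K categories:
   count vectors (n_1,...,n_K) with 0 <= n_i <= n (those with sum <> n have
   probability 0). *)
Definition counts (K n : nat) := {ffun 'I_K -> 'I_n.+1}.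

Definition prob_vector (R : realType) (K : nat) (p : 'I_K -> R) : Prop :=
  (forall i, 0 <= p i) /\ \sum_(i < K) p i = 1.

Definition multinomial_pmf (R : realType) (K n : nat) (p : 'I_K -> R)
    (c : counts K n) : R :=
  if (\sum_(i < K) (c i : nat))%N == n then
    (n`!)%:R / (\prod_(i < K) ((c i : nat)`!))%:R * \prod_(i < K) p i ^+ (c i : nat)
  else 0.

Definition multinomial_prob (R : realType) (K n : nat) (p : 'I_K -> R)
    (E : counts K n -> bool) : R :=
  \sum_(c : counts K n | E c) multinomial_pmf p c.

(* Main.v *)
Require Import Defs.
From HB Require Import structures.
From mathcomp Require Import all_boot all_order all_algebra.
From mathcomp Require Import all_classical all_reals exp.
From mathcomp Require Import all_analysis.
Import numFieldNormedType.Exports.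
From mathcomp Require Import ring lra.
Import Order.TTheory GRing.Theory Num.Theory.
From mathcomp Require Import ring lra.
Local Open Scope ring_scope.
Section S.
Variable R : realType.
Lemma expR_ge1Dx2 (x : R) : 0 <= x -> 1 + x + x ^+ 2 / 2 <= expR x.
Proof.
move=> x_ge0; rewrite /expR.
pose f (i : nat) : R := (i == 0)%:R + x *+ (i == 1) + x ^+ 2 / 2 *+ (i == 2).
have F m : (2 < m)%N -> \sum_(0 <= i < m) f i = 1 + x + x ^+ 2 / 2.
  move=> m3.
  rewrite (@big_cat_nat _ _ _ 3)//= !big_nat_recl// big_geq// big_nat_cond big1 ?addr0.
    by rewrite /f /=; rewrite !mulr1n !mulr0n; ring.
  by move=> i /andP[/andP[ai _] _]; rewrite /f !gtn_eqF// ?(ltn_trans _ ai)// mulr0n !addr0.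
rewrite [leLHS](_ : _ = limn (series f)); last first.
  by apply/esym/(@lim_near_cst R^o) => //; near=> k; apply: F; near: k.
apply: ler_lim; first by apply: is_cvg_near_cst; near=> k; apply: F; near: k.
  exact: is_cvg_series_exp_coeff.
near=> k; apply: ler_sum => -[|[|[|i]]] _; rewrite /f /exp_coeff/=.
- by rewrite !(mulr0n, expr0, addr0, divr1, mulr1n).
- by rewrite !(mulr0n, expr1, addr0, add0r, divr1, mulr1n).
- by rewrite !(mulr0n, addr0, add0r, mulr1n).
- by rewrite !mulr0n !addr0 divr_ge0// exprn_ge0.
Unshelve. all: by end_near. Qed.

Lemma expRN_le (y : R) : 0 <= y -> expR (- y) <= 1 - y + y ^+ 2 / 2.
Proof.
move=> y0; have h := expR_ge1Dx2 y y0.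
have hp : 0 < 1 + y + y ^+ 2 / 2 by have := sqr_ge0 y; lra.
rewrite expRN; apply: (le_trans (y := (1 + y + y ^+ 2 / 2)^-1)).
  by rewrite lef_pV2 // ?posrE ?expR_gt0.
rewrite -div1r ler_pdivrMr //.
have : 0 <= y ^+ 4 by rewrite exprn_ge0.
have e : y ^+ 4 = y ^+ 2 * y ^+ 2 by rewrite -exprD.
rewrite e => h4.
have -> : (1 - y + y ^+ 2 / 2) * (1 + y + y ^+ 2 / 2) = 1 + y ^+ 2 * y ^+ 2 / 4 by field.
lra.
Qed.
End S.
Section M.
Variable R : numFieldType.
Variables K N : nat.
Local Notation C := {ffun 'I_K -> 'I_N.+1}.
Definition sz (c : C) : nat := (\sum_i (c i : nat))%N.
Definition mcoef m (c : C) : R := (m`!)%:R / (\prod_i ((c i : nat)`!))%:R.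
Definition mon (a : 'I_K -> R) (c : C) : R := \prod_i a i ^+ (c i : nat).
Definition inc (j : 'I_K) (c : C) : C := [ffun i => inord (c i + (i == j))].
Definition dec (j : 'I_K) (c : C) : C := [ffun i => inord (c i - (i == j))].

Lemma inordN k : (N < k)%N -> (inord k : 'I_N.+1) = ord0.
Proof. by move=> h; rewrite /inord /insubd insubN // -leqNgt. Qed.

Lemma incE (j : 'I_K) (c : C) (i : 'I_K) : (c j < N)%N -> (inc j c i : nat) = (c i + (i == j))%N.
Proof.
move=> h; rewrite ffunE inordK //.
have [->|ij] := eqVneq i j; first by rewrite /= addn1 ltnS.
by rewrite /= addn0 ltn_ord.
Qed.

Lemma decE (j : 'I_K) (c : C) (i : 'I_K) : (dec j c i : nat) = (c i - (i == j))%N.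
Proof. by rewrite ffunE inordK // ltnS (leq_trans (leq_subr _ _)) // -ltnS. Qed.

Lemma sum_eqj (j : 'I_K) : (\sum_i ((i == j) : nat))%N = 1%N.
Proof. by rewrite (bigD1 j) //= eqxx big1 // => i /negbTE ->. Qed.

Lemma sz_inc (j : 'I_K) (c : C) : (c j < N)%N -> sz (inc j c) = (sz c).+1.
Proof.
move=> h; rewrite /sz (eq_bigr _ (fun i _ => incE j c i h)) big_split /= sum_eqj addn1 //.
Qed.

Lemma mon_inc a (j : 'I_K) (c : C) : (c j < N)%N -> mon a (inc j c) = a j * mon a c.
Proof.
move=> h; rewrite /mon (eq_bigr _ (fun i _ => congr1 _ (incE j c i h))).
under eq_bigr do rewrite exprD.
rewrite big_split /= mulrC; congr (_ * _).
by rewrite (bigD1 j) //= eqxx expr1 big1 ?mulr1 // => i /negbTE ->.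
Qed.

Lemma fact_inc (j : 'I_K) (c : C) : (c j < N)%N ->
  (\prod_i ((inc j (c : C) i : nat)`!) = (\prod_i ((c i : nat)`!)) * (c j).+1)%N.
Proof.
move=> h; rewrite (bigD1 j) //= [X in (_ = X * _)%N](bigD1 j) //= incE // eqxx addn1 factS.
have -> : (\prod_(i < K | i != j) (inc j c i)`! = \prod_(i < K | i != j) (c i)`!)%N.
  by apply: eq_bigr => i /negbTE ij; rewrite incE // ij addn0.
by rewrite [RHS]mulnC mulnA.
Qed.

Lemma inc_dec (j : 'I_K) (d : C) : (0 < d j)%N -> inc j (dec j d) = d.
Proof.
move=> h; apply/ffunP => i; apply/val_inj => /=.
have hj : (dec j d j < N)%N by rewrite decE eqxx -ltnS subn1 prednK // ltn_ord.
rewrite incE // decE; have [->|ij] := eqVneq i j; last by rewrite /= !subn0 addn0.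
by rewrite /= subn1 addn1 prednK.
Qed.

Lemma dec_inc (j : 'I_K) (c : C) : (c j < N)%N -> dec j (inc j c) = c.
Proof.
move=> h; apply/ffunP => i; apply/val_inj => /=.
by rewrite decE incE // addnK.
Qed.

Lemma fact_pos (c : C) : (0 < \prod_i ((c i : nat)`!))%N.
Proof. by rewrite prodn_gt0 // => i; rewrite fact_gt0. Qed.

Lemma sz_ge (j : 'I_K) (c : C) : (c j <= sz c)%N.
Proof. by rewrite /sz (bigD1 j) //= leq_addr. Qed.


Lemma multinomial_thm (a : 'I_K -> R) m : (m <= N)%N ->
  (\sum_i a i) ^+ m = \sum_(c : C | sz c == m) mcoef m c * mon a c.
Proof.
elim: m => [_|m IH hm].
  pose c0 : C := [ffun => ord0].
  rewrite expr0 (big_pred1 c0); last first.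
    move=> c; rewrite /sz sum_nat_eq0 /=; apply/forallP/eqP => [H|->].
      apply/ffunP => i; rewrite ffunE; apply/val_inj => /=; by move: (H i) => /eqP.
    by move=> i; rewrite ffunE.
  have e1 : (\prod_i ((c0 i : nat)`!) = 1)%N by apply: big1 => i _; rewrite ffunE.
  have e2 : mon a c0 = 1 by apply: big1 => i _; rewrite ffunE expr0.
  by rewrite /mcoef e1 e2 divr1 mulr1.
have hm' : (m <= N)%N := ltnW hm.
rewrite exprS IH // mulr_suml.
transitivity (\sum_j \sum_(d : C | sz d == m.+1)
   (d j : nat)%:R * ((m`!)%:R / (\prod_i ((d i : nat)`!))%:R) * mon a d).
  apply: eq_bigr => j _.
  rewrite mulr_sumr.
  rewrite [RHS](bigID (fun d : C => 0 < d j)%N) /= [X in _ = _ + X]big1 ?addr0; last first.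
    by move=> d /andP[_]; rewrite -eqn0Ngt => /eqP->; rewrite !mul0r.
  rewrite [RHS](reindex_onto (inc j) (dec j)) /=; last by move=> d /andP[_]; exact: inc_dec.
  apply: eq_big => [c|c hc].
    case: (ltnP (c j) N) => hcj.
      by rewrite sz_inc // incE // dec_inc // !eqxx /= addn1 eqSS ltn0Sn !andbT.
    have -> : inc j c j = ord0 by rewrite /inc ffunE eqxx inordN // addn1 ltnS.
    rewrite /= andbF; apply/negbTE.
    by rewrite neq_ltn (leq_trans hm (leq_trans hcj (sz_ge j c))) orbT.
  have hcj : (c j < N)%N.
    by apply: leq_ltn_trans hm; rewrite -(eqP hc) sz_ge.
  rewrite mon_inc // fact_inc // incE // eqxx addn1 natrM /mcoef.
  have h1 : (\prod_i ((c i : nat)`!))%:R != 0 :> R by rewrite pnatr_eq0 -lt0n fact_pos.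
  have h2 : (c j).+1%:R != 0 :> R by rewrite pnatr_eq0.
  by field; rewrite addrC natr1 h1 h2.
rewrite (exchange_big_dep xpredT) //= [RHS]big_mkcond /=.
apply: eq_bigr => d _; case: (boolP (sz d == m.+1)) => hd; last first.
  by rewrite big_pred0 // => i; rewrite (negbTE hd).
rewrite (eq_bigl xpredT) //.
rewrite -!mulr_suml -natr_sum.
have -> : (\sum_j (d j : nat))%N = m.+1 by apply/eqP.
by rewrite /mcoef factS natrM mulrA.
Qed.

End M.

Section Main.
Variable R : realType.
Variables (K n : nat) (p : 'I_K -> R).
Hypothesis n1 : (1 <= n)%N.
Hypothesis hp : prob_vector p.

Let S := \sum_(i < K) p i ^+ 2.
Let X (c : counts K n) : R := \sum_i p i * (c i : nat)%:R.

Lemma p_ge0 i : 0 <= p i. Proof. by case: hp. Qed.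
Lemma p_le1 i : p i <= 1.
Proof.
case: hp => h0 h1; rewrite -h1 (bigD1 i) //= lerDl.
by apply: sumr_ge0 => j _; apply: h0.
Qed.

Lemma pmf_ge0 (c : counts K n) : 0 <= multinomial_pmf p c.
Proof.
rewrite /multinomial_pmf; case: ifP => // _.
apply: mulr_ge0; first by apply: divr_ge0; apply: ler0n.
by apply: prodr_ge0 => i _; apply: exprn_ge0; apply: p_ge0.
Qed.

Lemma key_event (s : R) (c : counts K n) :
  S > \sum_(i < K) ((c i : nat)%:R / n%:R) ^+ 2 + 2 * s ->
  X c < n%:R * (S - s).
Proof.
move=> hE.
pose q (i : 'I_K) : R := (c i : nat)%:R / n%:R.
have n0 : 0 < n%:R :> R by rewrite ltr0n.
have h0 : 0 <= \sum_i (q i - p i) ^+ 2 by apply: sumr_ge0 => i _; apply: sqr_ge0.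
have e : \sum_i (q i - p i) ^+ 2 = \sum_i q i ^+ 2 - 2 * \sum_i p i * q i + S.
  rewrite /S mulr_sumr -sumrB -big_split /=; apply: eq_bigr => i _; ring.
have eX : X c = n%:R * \sum_i p i * q i.
  rewrite /X mulr_sumr; apply: eq_bigr => i _; rewrite /q; field.
  by rewrite lt0r_neq0.
rewrite eX ltr_pM2l //.
move: hE; rewrite -/(q _) => hE.
have hE' : \sum_i q i ^+ 2 + 2 * s < S by exact: hE.
lra.
Qed.

Lemma mgf (lam : R) :
  \sum_(c : counts K n) multinomial_pmf p c * expR (- lam * X c)
  = (\sum_i p i * expR (- lam * p i)) ^+ n.
Proof.
rewrite (@multinomial_thm R K n) // [RHS]big_mkcond /=.
apply: eq_bigr => c _; rewrite /multinomial_pmf /sz.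
case: ifP => _; last by rewrite mul0r.
rewrite /mcoef /mon -!mulrA; do 2 congr (_ * _).
rewrite /X mulr_sumr expR_sum -big_split /=; apply: eq_bigr => i _.
by rewrite exprMn -expRM_natl; congr (_ * expR _); ring.
Qed.

Lemma A_bound (lam : R) : 0 <= lam ->
  \sum_i p i * expR (- lam * p i) <= 1 - lam * S + lam ^+ 2 / 2.
Proof.
move=> l0.
apply: (le_trans (y := \sum_i (p i - lam * p i ^+ 2 + lam ^+ 2 / 2 * p i))).
  apply: ler_sum => i _.
  have p0 := p_ge0 i; have p1 := p_le1 i.
  have y0 : 0 <= lam * p i by apply: mulr_ge0.
  rewrite mulNr; apply: (le_trans (ler_wpM2l p0 (@expRN_le _ _ y0))).
  have h3 : p i * p i * p i <= p i by nra.
  have hl : 0 <= lam ^+ 2 by apply: sqr_ge0.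
  have : 0 <= lam ^+ 2 * (p i - p i * p i * p i) by apply: mulr_ge0 => //; lra.
  rewrite !expr2; nra.
case: hp => _ h1.
rewrite !big_split /= sumrN -!mulr_sumr h1 mulr1.
done.
Qed.

Lemma chernoff (s lam : R) : 0 <= lam ->
  multinomial_prob p (fun c : counts K n =>
       S > \sum_(i < K) ((c i : nat)%:R / n%:R) ^+ 2 + 2 * s)
  <= expR (n%:R * (lam ^+ 2 / 2 - lam * s)).
Proof.
move=> l0; rewrite /multinomial_prob.
apply: (le_trans (y := \sum_(c : counts K n)
   multinomial_pmf p c * expR (lam * (n%:R * (S - s)) + - lam * X c))).
  rewrite big_mkcond /=; apply: ler_sum => c _.
  case: ifP => hE; last by apply: mulr_ge0; [apply: pmf_ge0 | apply: expR_ge0].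
  rewrite -[leLHS]mulr1; apply: ler_wpM2l; first exact: pmf_ge0.
  rewrite -[leLHS](expR0 R) ler_expR mulNr -mulrBr; apply: mulr_ge0 => //.
  by rewrite subr_ge0; apply/ltW; apply: key_event.
under eq_bigr do rewrite expRD mulrCA.
rewrite -mulr_sumr mgf.
apply: (le_trans (y := expR (lam * (n%:R * (S - s))) * expR (- lam * S + lam ^+ 2 / 2) ^+ n)).
  apply: ler_wpM2l; first exact: expR_ge0.
  apply: lerXn2r.
  - by rewrite nnegrE; apply: sumr_ge0 => i _; apply: mulr_ge0; [apply: p_ge0|apply: expR_ge0].
  - by rewrite nnegrE expR_ge0.
  apply: (le_trans (A_bound lam l0)).
  by apply: le_trans (expR_ge1Dx _); lra.
rewrite -expRM_natl -expRD ler_expR.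
rewrite le_eqVlt; apply/orP; left; apply/eqP; ring.
Qed.

End Main.

Theorem lemma8 (R : realType) (K n : nat) (p : 'I_K -> R) (delta : R) :
  (1 <= n)%N -> prob_vector p -> 0 < delta ->
  multinomial_prob p
    (fun c : counts K n =>
       \sum_(i < K) (p i) ^+ 2 >
       \sum_(i < K) ((c i : nat)%:R / n%:R) ^+ 2
         + 2 * Num.sqrt (2 / n%:R * ln (K%:R / delta)))
  < delta.
Proof.
move=> n1 hp d0.
have n0 : 0 < n%:R :> R by rewrite ltr0n.
case: K p hp => [|[|K']] p hp.
- by case: hp => _; rewrite big_ord0 => /eqP; rewrite eq_sym oner_eq0.
- rewrite /multinomial_prob big1 // => c hE.
  rewrite /multinomial_pmf; case: ifP => // hc; exfalso.
  move: hE hc; rewrite !big_ord1 => hE /eqP hc.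
  case: hp => _; rewrite big_ord1 => p1.
  move: hE; rewrite p1 hc divff ?lt0r_neq0 // expr1n.
  have := sqrtr_ge0 (2 / n%:R * ln (1%:R / delta)); lra.
- set L := ln _.
  set s := Num.sqrt _.
  case: (ltrP 1 delta) => hd.
    apply: le_lt_trans (@chernoff _ _ _ p n1 hp s 0 (lexx 0)) _.
    have -> : n%:R * (0 ^+ 2 / 2 - 0 * s) = 0 :> R by ring.
    by rewrite expR0.
  have hK : 2 <= K'.+2%:R :> R by rewrite ler_nat.
  have hKd : K'.+2%:R <= K'.+2%:R / delta.
    by rewrite ler_pdivlMr //; nra.
  have L0 : 0 < L by rewrite /L ln_gt0 //; lra.
  apply: le_lt_trans (@chernoff _ _ _ p n1 hp s s (sqrtr_ge0 _)) _.
  have hs2 : s ^+ 2 = 2 / n%:R * L.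
    by rewrite /s sqr_sqrtr // mulr_ge0 // ?divr_ge0 // ltW.
  have -> : n%:R * (s ^+ 2 / 2 - s * s) = - L.
    rewrite -expr2 hs2; field; by rewrite lt0r_neq0.
  rewrite expRN /L lnK ?posrE ?divr_gt0 ?ltr0n //.
  rewrite invf_div ltr_pdivrMr ?ltr0n //.
  nra.
Qed.
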